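(* Let $0<\mu<1$. On zero-mean functions on $\mathbb T^3$ define Fourier multipliers: $\mathcal Q$ with symbol $\widehat{\mathcal Q}(k,l,m)=\frac{\sqrt2}{\sqrt{1+\mu^2+\sqrt{(1+\mu^2)^2-4\mu^2\frac{m^2}{k^2+l^2+m^2}}}}$ (i.e. $\mathcal Q=\sqrt{2(1+\mu^2+\sqrt{(1+\mu^2)^2-4\mu^2\partial_z^2\Delta^{-1}})^{-1}}$), and $$\mathcal C=-\mathcal Q(1-\mu^2\partial_z^2\Delta^{-1}\mathcal Q^2)^{-1},\quad\mathcal A=-\mathcal C\mathcal Q^{-1},\quad\mathcal B=\partial_z^2\Delta^{-1}\mathcal C\mathcal Q,\quad\mathcal D=\mathcal Q^{-1}.$$ For a scalar function $\varphi$ define the 7-component states $$V_\alpha\varphi=\Big(\varphi,\ \mathbf 0_3,\ \mu\mathcal A\Delta^{-1}\partial_z\nabla\varphi+(0,0,-\mu\varphi+\mu^3\mathcal B\varphi)\Big),\qquad V_\beta\varphi=\Big(0,\ (\mu^2\mathcal C\Delta^{-1}\partial_z\nabla_h\varphi,\ \mathcal D\varphi),\ \mathbf 0_3\Big).$$ Then for every such $\varphi$, $$(\mathcal L_A+\mu\mathcal L_M)(V_\alpha\varphi)+\mu\mathcal Q\partial_z(V_\beta\varphi)=0=(\mathcal L_A+\mu\mathcal L_M)(V_\beta\varphi)+\mu\mathcal Q\partial_z(V_\alpha\varphi).$$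
   Context: Spatial domain $\mathbb T^3$ with coordinates $(x,y,z)$ and Fourier variables $(k,l,m)$. States are $V=(r,\mathbf u,\mathbf b)$ with $\mathbf u=(\mathbf u_h,u_3)$, $\mathbf b=(\mathbf b_h,b_3)$, $\mathbf w_h=(w_1,w_2)$. $\nabla_h=(\partial_x,\partial_y)$; $\Delta^{-1}$ is the inverse Laplacian on zero-mean functions, so $\partial_z^2\Delta^{-1}$ has symbol $m^2/(k^2+l^2+m^2)$. $\mathcal L_AV=(0,(-\nabla_hb_3+\partial_z\mathbf b_h,0),(\partial_z\mathbf u_h,-\nabla_h\cdot\mathbf u_h))$, $\mathcal L_MV=(-\nabla\cdot\mathbf u,-\nabla r,\mathbf 0)$. *)

(* Defs.v *)
From mathcomp Require Import all_boot all_order all_algebra.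
From mathcomp Require Import complex.
From mathcomp Require Import reals.
Set Implicit Arguments. Unset Strict Implicit. Unset Printing Implicit Defensive.
Import Order.TTheory GRing.Theory Num.Theory.
Local Open Scope ring_scope.

(* Fourier model of (distributional) functions on T^3 = (R/2piZ)^3:
   a scalar function is its family of Fourier coefficients
   phi(k,l,m), (k,l,m) in Z^3, for the modes exp(i(kx+ly+mz)). *)
Definition freq := (int * int * int)%type.
Definition kx (q : freq) : int := q.1.1.
Definition ly (q : freq) : int := q.1.2.
Definition mz (q : freq) : int := q.2.

Section Fourier.
Variable R : realType.

Definition field := freq -> R[i].

Definition zero_mean (phi : field) : Prop := phi (0, 0, 0) = 0.

Definition mult (s : freq -> R[i]) (phi : field) : field := fun q => s q * phi q.

Definition rsym (s : freq -> R) : freq -> R[i] := fun q => ((s q)%:C)%C.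

Definition dx : field -> field := mult (fun q => ('i)%C * (((kx q)%:~R)%:C)%C).
Definition dy : field -> field := mult (fun q => ('i)%C * (((ly q)%:~R)%:C)%C).
Definition dz : field -> field := mult (fun q => ('i)%C * (((mz q)%:~R)%:C)%C).

Definition ksq (q : freq) : R := ((kx q)%:~R) ^+ 2 + ((ly q)%:~R) ^+ 2 + ((mz q)%:~R) ^+ 2.

(* inverse Laplacian on zero-mean functions: symbol -1/|kappa|^2
   (the zero mode is sent to 0) *)
Definition invLap : field -> field := mult (rsym (fun q => - (ksq q)^-1)).

(* symbol of d_z^2 Delta^{-1} : m^2/(k^2+l^2+m^2) *)
Definition Psym (q : freq) : R := ((mz q)%:~R) ^+ 2 / ksq q.

Definition Qsym (mu : R) (q : freq) : R :=
  Num.sqrt 2 / Num.sqrt (1 + mu ^+ 2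
     + Num.sqrt ((1 + mu ^+ 2) ^+ 2 - 4 * mu ^+ 2 * Psym q)).
Definition Csym (mu : R) (q : freq) : R :=
  - (Qsym mu q * (1 - mu ^+ 2 * Psym q * (Qsym mu q) ^+ 2)^-1).
Definition Asym (mu : R) (q : freq) : R := - (Csym mu q * (Qsym mu q)^-1).
Definition Bsym (mu : R) (q : freq) : R := Psym q * Csym mu q * Qsym mu q.
Definition Dsym (mu : R) (q : freq) : R := (Qsym mu q)^-1.

Definition Qop mu := mult (rsym (Qsym mu)).
Definition Cop mu := mult (rsym (Csym mu)).
Definition Aop mu := mult (rsym (Asym mu)).
Definition Bop mu := mult (rsym (Bsym mu)).
Definition Dop mu := mult (rsym (Dsym mu)).

Definition addF (f g : field) : field := fun q => f q + g q.
Definition oppF (f : field) : field := fun q => - f q.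
Definition sclF (c : R) (f : field) : field := fun q => (c%:C)%C * f q.
Definition zeroF : field := fun _ => 0.

Record state := State { st_r : field; st_u1 : field; st_u2 : field; st_u3 : field;
                        st_b1 : field; st_b2 : field; st_b3 : field }.

Definition zeroS : state := State zeroF zeroF zeroF zeroF zeroF zeroF zeroF.
Definition addS (V W : state) : state :=
  State (addF (st_r V) (st_r W)) (addF (st_u1 V) (st_u1 W)) (addF (st_u2 V) (st_u2 W))
        (addF (st_u3 V) (st_u3 W)) (addF (st_b1 V) (st_b1 W)) (addF (st_b2 V) (st_b2 W))
        (addF (st_b3 V) (st_b3 W)).
Definition sclS (c : R) (V : state) : state :=
  State (sclF c (st_r V)) (sclF c (st_u1 V)) (sclF c (st_u2 V)) (sclF c (st_u3 V))
        (sclF c (st_b1 V)) (sclF c (st_b2 V)) (sclF c (st_b3 V)).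
Definition mapS (T : field -> field) (V : state) : state :=
  State (T (st_r V)) (T (st_u1 V)) (T (st_u2 V)) (T (st_u3 V))
        (T (st_b1 V)) (T (st_b2 V)) (T (st_b3 V)).

Definition LA (V : state) : state :=
  State zeroF
        (addF (oppF (dx (st_b3 V))) (dz (st_b1 V)))
        (addF (oppF (dy (st_b3 V))) (dz (st_b2 V)))
        zeroF
        (dz (st_u1 V)) (dz (st_u2 V))
        (oppF (addF (dx (st_u1 V)) (dy (st_u2 V)))).

Definition LM (V : state) : state :=
  State (oppF (addF (addF (dx (st_u1 V)) (dy (st_u2 V))) (dz (st_u3 V))))
        (oppF (dx (st_r V))) (oppF (dy (st_r V))) (oppF (dz (st_r V)))
        zeroF zeroF zeroF.

Definition Valpha (mu : R) (phi : field) : state :=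
  State phi zeroF zeroF zeroF
        (sclF mu (Aop mu (invLap (dz (dx phi)))))
        (sclF mu (Aop mu (invLap (dz (dy phi)))))
        (addF (sclF mu (Aop mu (invLap (dz (dz phi)))))
              (addF (sclF (- mu) phi) (sclF (mu ^+ 3) (Bop mu phi)))).

Definition Vbeta (mu : R) (phi : field) : state :=
  State zeroF
        (sclF (mu ^+ 2) (Cop mu (invLap (dz (dx phi)))))
        (sclF (mu ^+ 2) (Cop mu (invLap (dz (dy phi)))))
        (Dop mu phi)
        zeroF zeroF zeroF.

End Fourier.

(* Main.v *)
Require Import Defs.
From mathcomp Require Import all_boot all_order all_algebra.
From mathcomp Require Import complex.
From mathcomp Require Import reals.
From mathcomp Require Import ring lra.
From Stdlib Require Import FunctionalExtensionality.
Import Order.TTheory GRing.Theory Num.Theory.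
Local Open Scope ring_scope.

Lemma facts (R : realType) (mu : R) (h0 : 0 < mu) (h1 : mu < 1) (q : freq)
  (hK : ksq R q != 0) :
  Qsym mu q != 0 /\
  1 - mu ^+ 2 * Psym R q * Qsym mu q ^+ 2 != 0 /\
  mu ^+ 2 * Psym R q * (Qsym mu q ^+ 2) ^+ 2 - (1 + mu ^+ 2) * Qsym mu q ^+ 2 + 1 = 0.
Proof.
have Kge : 0 <= ksq R q by rewrite /ksq; apply: addr_ge0; [apply: addr_ge0|]; apply: sqr_ge0.
have Kgt : 0 < ksq R q by rewrite lt_def hK Kge.
have P0 : 0 <= Psym R q by rewrite /Psym divr_ge0 // sqr_ge0.
have P1 : Psym R q <= 1.
  rewrite /Psym ler_pdivrMr // mul1r /ksq lerDr; apply: addr_ge0; apply: sqr_ge0.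
set P := Psym R q.
have hs : 0 <= (1 + mu ^+ 2) ^+ 2 - 4 * mu ^+ 2 * P.
  have hm : 0 <= mu ^+ 2 by apply: sqr_ge0.
  have h2 : 0 <= mu ^+ 2 * (1 - P) by apply: mulr_ge0 => //; rewrite subr_ge0.
  have h3 := sqr_ge0 (1 - mu ^+ 2).
  nra.
rewrite /Qsym -/P.
set S := Num.sqrt ((1 + mu ^+ 2) ^+ 2 - 4 * mu ^+ 2 * P).
have S0 : 0 <= S by rewrite /S sqrtr_ge0.
have S2 : S ^+ 2 = (1 + mu ^+ 2) ^+ 2 - 4 * mu ^+ 2 * P by rewrite sqr_sqrtr.
set T := 1 + mu ^+ 2 + S.
have T0 : 0 < T by rewrite /T; have := sqr_ge0 mu; lra.
have Q0 : 0 < Num.sqrt 2 / Num.sqrt T by rewrite divr_gt0 // sqrtr_gt0.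
have hx : (Num.sqrt 2 / Num.sqrt T) ^+ 2 = 2 / T.
  by rewrite expr_div_n !sqr_sqrtr // ltW.
split; first by rewrite gt_eqF.
rewrite hx; split.
  rewrite subr_eq0 eq_sym lt_eqF // mulrA ltr_pdivrMr // mul1r.
  have hm : mu ^+ 2 < 1 by rewrite expr2; nra.
  rewrite /T; nra.
have e : 4 * mu ^+ 2 * P - 2 * (1 + mu ^+ 2) * T + T ^+ 2 = 0.
  rewrite /T; have -> : 4 * mu ^+ 2 * P - 2 * (1 + mu ^+ 2) * (1 + mu ^+ 2 + S) + (1 + mu ^+ 2 + S) ^+ 2 = S ^+ 2 - ((1 + mu ^+ 2) ^+ 2 - 4 * mu ^+ 2 * P) by ring.
  by rewrite S2 subrr.
have Tn : T != 0 by rewrite gt_eqF.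
transitivity ((4 * mu ^+ 2 * P - 2 * (1 + mu ^+ 2) * T + T ^+ 2) / T ^+ 2).
  by field.
by rewrite e mul0r.
Qed.

Lemma ksq0 (R : realType) (q : freq) : ksq R q = 0 -> q = (0%R, 0%R, 0%R).
Proof.
rewrite /ksq => h.
have hk := sqr_ge0 ((kx q)%:~R : R).
have hl := sqr_ge0 ((ly q)%:~R : R).
have hm := sqr_ge0 ((mz q)%:~R : R).
have ek : kx q = 0 by apply/eqP; rewrite -(intr_eq0 R) -sqrf_eq0; apply/eqP; lra.
have el : ly q = 0 by apply/eqP; rewrite -(intr_eq0 R) -sqrf_eq0; apply/eqP; lra.
have em : mz q = 0 by apply/eqP; rewrite -(intr_eq0 R) -sqrf_eq0; apply/eqP; lra.
by clear h hk hl hm; case: q ek el em => [[a b] c]; rewrite /kx /ly /mz /= => -> -> ->.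
Qed.

Section CL.
Variable R : realType.
Lemma cadd (a b c d : R) : ((a +i* b) + (c +i* d) = (a + c) +i* (b + d))%C.
Proof. by []. Qed.
Lemma cmul (a b c d : R) : ((a +i* b) * (c +i* d) = (a * c - b * d) +i* (a * d + b * c))%C.
Proof. by []. Qed.
Lemma copp (a b : R) : (- (a +i* b) = (- a) +i* (- b))%C.
Proof. by []. Qed.
Lemma c0 : (0 : R[i]) = (0 +i* 0)%C.
Proof. by []. Qed.
End CL.
Ltac prep R mu phi h0 h1 hphi q :=
  cbv beta delta [addF oppF sclF zeroF Qop Aop Bop Cop Dop mult dz dx dy invLap rsym];
  let hK := fresh "hK" in
  case: (eqVneq (ksq R q) 0) => hK;
  [ let hz := fresh "hz" in
    (have hz : phi q = 0 by rewrite (@ksq0 _ _ hK); exact: hphi);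
    rewrite ?hz; ring
  | let hQ := fresh "hQ" in let hw := fresh "hw" in let hH := fresh "hH" in
    have [hQ [hw hH]] := @facts _ _ h0 h1 _ hK;
    rewrite /Asym /Bsym /Csym /Dsym /Psym /ksq in hK hw hH *;
    move: ((kx q)%:~R : R) ((ly q)%:~R : R) ((mz q)%:~R : R) (Qsym mu q) hQ hK hw hH;
    let k := fresh "k" in let l := fresh "l" in let m := fresh "m" in let Q := fresh "Q" in
    move=> k l m Q hQ hK hw hH;
    let hw' := fresh "hw'" in
    (have hw' : k ^+ 2 + l ^+ 2 + m ^+ 2 - (mu * m * Q) ^+ 2 != 0 by
      rewrite (_ : k ^+ 2 + l ^+ 2 + m ^+ 2 - (mu * m * Q) ^+ 2 =
         (k ^+ 2 + l ^+ 2 + m ^+ 2) * (1 - mu ^+ 2 * (m ^+ 2 / (k ^+ 2 + l ^+ 2 + m ^+ 2)) * Q ^+ 2)); [rewrite mulf_neq0 | field]);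
    case: (phi q) => a b;
    rewrite /real_complex_def;
    rewrite ?c0 !(cadd, cmul, copp);
    try apply: (@f_equal2 _ _ _ (@Complex _)) ].

Theorem lemma2p2 (R : realType) (mu : R) (hmu0 : 0 < mu) (hmu1 : mu < 1)
  (phi : field R) (hphi : zero_mean phi) :
  addS (addS (LA (Valpha mu phi)) (sclS mu (LM (Valpha mu phi))))
       (sclS mu (mapS (fun f => Qop mu (dz f)) (Vbeta mu phi))) = zeroS R
  /\
  addS (addS (LA (Vbeta mu phi)) (sclS mu (LM (Vbeta mu phi))))
       (sclS mu (mapS (fun f => Qop mu (dz f)) (Valpha mu phi))) = zeroS R.
Proof.
rewrite /addS /sclS /mapS /LA /LM /Valpha /Vbeta /=.
split; congr State; apply: functional_extensionality => q; prep R mu phi hmu0 hmu1 hphi q.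
all: try (field; by rewrite ?hK ?hw' ?hQ).
all: match goal with
 | hH : ?H = 0 |- _ =>
   first
   [ transitivity (mu * m * b / (Q * (1 - mu ^+ 2 * (m ^+ 2 / (k ^+ 2 + l ^+ 2 + m ^+ 2)) * Q ^+ 2)) * H);
       [field; by rewrite ?hK ?hw' ?hQ | by rewrite hH mulr0]
   | transitivity (- (mu * m * a) / (Q * (1 - mu ^+ 2 * (m ^+ 2 / (k ^+ 2 + l ^+ 2 + m ^+ 2)) * Q ^+ 2)) * H);
       [field; by rewrite ?hK ?hw' ?hQ | by rewrite hH mulr0]
   | transitivity (- (mu * m * b) / (Q * (1 - mu ^+ 2 * (m ^+ 2 / (k ^+ 2 + l ^+ 2 + m ^+ 2)) * Q ^+ 2)) * H);
       [field; by rewrite ?hK ?hw' ?hQ | by rewrite hH mulr0]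
   | transitivity ((mu * m * a) / (Q * (1 - mu ^+ 2 * (m ^+ 2 / (k ^+ 2 + l ^+ 2 + m ^+ 2)) * Q ^+ 2)) * H);
       [field; by rewrite ?hK ?hw' ?hQ | by rewrite hH mulr0] ]
 end.
Qed.
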